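(* For every $\tau$ with $0<\tau<1$, $$R(\tau)\ \le\ \overline{R}(\tau):=\min_{0\le\tau'\le\tau}\ \max\Big\{r\in[0,1]:\ h(v)\le 1-v\,h\Big(\min\Big(\tfrac{\tau-\tau'}{v(1-\tau')},\tfrac12\Big)\Big)\Big\},$$ where, for given $r$ and $\tau'$, $v=v(r,\tau')$ denotes the real number with $0\le v\le 1/2$ and $h(v)(1-\tau')=r$.
   Context: $h(x)=-x\log_2x-(1-x)\log_2(1-x)$ is the binary entropy function. Binary Z-channel with noiseless feedback: an input $0$ is always received as $0$; an input $1$ is received as $1$ or (an error) as $0$. A feedback encoding strategy of blocklength $n$ for a finite message set $\mathcal M$ consists of functions $c_i:\mathcal M\times\{0,1\}^{i-1}\to\{0,1\}$, $i=1,\dots,n$; when sending $m$ the $i$-th transmitted symbol is $c_i(m,y^{i-1})$, with $y^{i-1}$ the previously received symbols. Let $c(m,y^{n-1})=(c_1(m),\dots,c_n(m,y^{n-1}))$ and $\mathcal Y^n_t(m)=\{y^n\in\{0,1\}^n:y_i\le c_i(m,y^{i-1})\ \forall i,\ d_H(y^n,c(m,y^{n-1}))\le t\}$. The strategy is successful if the sets $\mathcal Y^n_t(m)$, $m\in\mathcal M$, are pairwise disjoint. $M(n,t)$ is the maximum $|\mathcal M|$ admitting a successful strategy of blocklength $n$ with at most $t$ errors, and $R(\tau):=\limsup_{n\to\infty}\frac1n\log_2M(n,\lceil\tau n\rceil)$. *)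

(* Defs.v *)
From HB Require Import structures.
From mathcomp Require Import all_boot all_order all_algebra.
From mathcomp Require Import all_classical all_reals all_analysis.
Set Implicit Arguments. Unset Strict Implicit. Unset Printing Implicit Defensive.
Import Order.TTheory GRing.Theory Num.Theory.
Local Open Scope ring_scope.
Local Open Scope classical_set_scope.

Section Defs.
Variable R : realType.

(* base-2 logarithm; note ln x = 0 for x <= 0, so 0 * log2 0 = 0 *)
Definition log2 (x : R) : R := ln x / ln 2.

Definition h (x : R) : R := - x * log2 x - (1 - x) * log2 (1 - x).

Definition inner_set (tau tau' : R) : set R :=
  [set r | 0 <= r <= 1 /\
     exists v : R, [/\ 0 <= v <= 2^-1, h v * (1 - tau') = r &
       h v <= 1 - v * h (Num.min ((tau - tau') / (v * (1 - tau'))) 2^-1)]].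

Definition Rbar (tau : R) : R :=
  inf [set sup (inner_set tau tau') | tau' in [set tau' : R | 0 <= tau' <= tau]].
End Defs.

(* A feedback encoding strategy for the message set 'I_k: c m p is the symbol
   c_i(m, y^{i-1}) sent when the previously received symbols are p = y^{i-1}
   (only prefixes p of length < n matter). *)
Definition strategy (k : nat) := 'I_k -> seq bool -> bool.

Definition inY (n t k : nat) (c : strategy k) (m : 'I_k) (y : seq bool) : Prop :=
  [/\ size y = n,
      (forall i, (i < n)%N -> nth false y i ==> c m (take i y)) &
      (\sum_(i < n) (nth false y i != c m (take i y)) <= t)%N].

Definition successful (n t k : nat) (c : strategy k) : Prop :=
  forall (m1 m2 : 'I_k) (y : seq bool), m1 != m2 ->
    inY n t c m1 y -> inY n t c m2 y -> False.

Definition admits (n t k : nat) : Prop := exists c : strategy k, successful n t c.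

(* Any successful strategy has at most 2^n messages (the sets Y are nonempty
   and disjoint subsets of {0,1}^n), so the maximum may be taken over k <= 2^n. *)
Definition Mnt (n t : nat) : nat :=
  \max_(k < (2 ^ n).+1 | `[< admits n t k >]) k.

Definition Rate (R : realType) (tau : R) : R :=
  limn_sup (fun n : nat =>
    (n%:R)^-1 * log2 ((Mnt n `|Num.ceil (tau * n%:R)|%N)%:R : R)).

(* Main.v *)
Require Import Defs.
From HB Require Import structures.
From mathcomp Require Import all_boot all_order all_algebra.
From mathcomp Require Import all_classical all_reals all_analysis.
From mathcomp Require Import zify ring lra.
Import Order.TTheory GRing.Theory Num.Theory.

Module Helpers.
Set Implicit Arguments. Unset Strict Implicit. Unset Printing Implicit Defensive.
Import numFieldNormedType.Exports.
Ltac tlra := timeout 20 lra.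

Fixpoint allseq (r : nat) : seq (seq bool) :=
  if r is r'.+1 then map (cons true) (allseq r') ++ map (cons false) (allseq r')
  else [:: [::]].

Lemma size_allseq r : size (allseq r) = 2 ^ r.
Proof. elim: r => //= r IH; rewrite size_cat !size_map IH expnS; lia. Qed.

Lemma allseq_size r y : y \in allseq r -> size y = r.
Proof.
elim: r y => [|r IH] y /=; first by rewrite inE => /eqP->.
by rewrite mem_cat => /orP[] /mapP[z /IH <- ->].
Qed.

Lemma allseqP r y : size y = r -> y \in allseq r.
Proof.
elim: r y => [|r IH] [|x y] //= [] /IH Hy; rewrite mem_cat.
by case: x; [rewrite (map_f (cons true) Hy)|rewrite (map_f (cons false) Hy) orbT].
Qed.

Fixpoint okS (f : seq bool -> bool) (p : seq bool) (b : nat) (s : seq bool) : bool :=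
  match s with
  | [::] => true
  | x :: s' => (x ==> f p) &&
      (if x != f p then (0 < b) && okS f (rcons p x) b.-1 s'
       else okS f (rcons p x) b s')
  end.

Fixpoint gen (f : seq bool -> bool) (p : seq bool) (r : nat) : seq bool :=
  if r is r'.+1 then f p :: gen f (rcons p (f p)) r' else [::].

Lemma size_gen f p r : size (gen f p r) = r.
Proof. by elim: r p => //= r IH p; rewrite IH. Qed.

Lemma okS_gen f p b r : okS f p b (gen f p r).
Proof. elim: r p => //= r IH p; by rewrite implybb eqxx IH. Qed.

Lemma count_allseq_pos f p b r : 0 < count (okS f p b) (allseq r).
Proof.
rewrite -has_count; apply/hasP; exists (gen f p r); last exact: okS_gen.
by apply: allseqP; rewrite size_gen.
Qed.

Lemma count_allseqS (P : pred (seq bool)) r :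
  count P (allseq r.+1) = count (fun s => P (true :: s)) (allseq r)
                        + count (fun s => P (false :: s)) (allseq r).
Proof. by rewrite /= count_cat !count_map. Qed.

Definition wt (s : seq bool) := count id s.

Lemma tree_bound r f p b k J :
  (forall s, size s = r -> okS f p b s -> k <= wt s) ->
  'C(k, minn b J) <= count (okS f p b) (allseq r).
Proof.
elim: r f p b k => [|r IH] f p b k H.
  have := H [::] erefl erefl; rewrite /wt /= leqn0 => /eqP->.
  by rewrite bin0n; case: (minn b J == 0).
rewrite count_allseqS /=.
case fp: (f p) => /=.
- case: k H => [|k] H.
    have := count_allseq_pos f p b r.+1; rewrite count_allseqS /= fp /=.
    by rewrite bin0n; case: (minn b J == 0).
  have H1 : 'C(k, minn b J) <= count (okS f (rcons p true) b) (allseq r).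
    apply: IH => s Hs Hok.
    by have := H (true :: s); rewrite /= fp /= Hs Hok /wt /= => /(_ erefl erefl).
  case: b H H1 => [|b] H H1.
    by move: H1; rewrite min0n !bin0 => H1; apply: leq_trans H1 (leq_addr _ _).
  have H2 : 'C(k.+1, minn b J) <= count (okS f (rcons p false) b) (allseq r).
    apply: IH => s Hs Hok.
    by have := H (false :: s); rewrite /= fp /= Hs Hok /wt /= => /(_ erefl erefl).
  apply: (leq_trans _ (leq_add H1 H2)).
  case: (leqP b.+1 J) => hJ.
    rewrite (minn_idPl (ltnW hJ)) binS leq_add2l.
    exact: leq_bin2l.
  idtac.
  have -> : minn b J = J by apply/minn_idPr; rewrite -ltnS.
  exact: leq_addl.
- have H1 : 'C(k, minn b J) <= count (okS f (rcons p false) b) (allseq r).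
    apply: IH => s Hs Hok.
    by have := H (false :: s); rewrite /= fp /= Hs Hok /wt /= => /(_ erefl erefl).
  by rewrite (@eq_count _ _ pred0) // count_pred0.
Qed.

Lemma okS_props f p b s : okS f p b s ->
  (forall i, i < size s -> nth false s i ==> f (p ++ take i s)) /\
  \sum_(i < size s) (nth false s i != f (p ++ take i s)) <= b.
Proof.
elim: s p b => [|x s IH] p b /=.
  by split => // ; rewrite big_ord0.
move=> /andP[hx].
have key : forall b', okS f (rcons p x) b' s ->
  (forall i, i < size s -> nth false s i ==> f (p ++ take i.+1 (x :: s))) /\
  \sum_(i < size s) (nth false s i != f (p ++ take i.+1 (x :: s))) <= b'.
  move=> b' /IH [H1 H2]; split => [i hi|]; first by rewrite /= -cat_rcons H1.
  by under eq_bigr => i _ do rewrite /= -cat_rcons.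
case: ifP => hne.
  move=> /andP[b0 /key [H1 H2]]; split.
    case=> [|i] /=; [by rewrite ?cats0 | by move=> hi; apply: H1].
  rewrite big_ord_recl /= ?take0 ?cats0 hne.
  under eq_bigr => i _ do rewrite /bump /=.
  by move: H2 b0; case: b => //= b; lia.
move=> /key [H1 H2]; split.
  case=> [|i] /=; [by rewrite ?cats0 | by move=> hi; apply: H1].
rewrite big_ord_recl /= ?take0 ?cats0 hne add0n.
by under eq_bigr => i _ do rewrite /bump /=.
Qed.

Lemma okS_inY n t k (c : strategy k) m y :
  size y = n -> okS (c m) [::] t y -> inY n t c m y.
Proof.
move=> hs /okS_props [H1 H2]; rewrite -hs; split => //.
Qed.

Fixpoint zb (f : seq bool -> bool) (p : seq bool) (b r : nat) : nat :=
  if r is r'.+1 then (if f p then zb f (rcons p false) b.-1 r' else zb f (rcons p false) b r')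
  else b.

Lemma zbP f r p b : r <= b -> b - r <= zb f p b r /\
  forall s, okS f (p ++ nseq r false) (zb f p b r) s -> okS f p b (nseq r false ++ s).
Proof.
elim: r p b => [|r IH] p b /= hr.
  by split; [rewrite subn0 | move=> s; rewrite cats0].
case fp: (f p) => /=.
  have [H1 H2] := IH (rcons p false) b.-1 ltac:(lia).
  split; first lia.
  move=> s hs; apply/andP; split; first lia.
  by apply: H2; rewrite -cat_rcons in hs.
have [H1 H2] := IH (rcons p false) b ltac:(lia).
split; first lia.
by move=> s hs; apply: H2; rewrite -cat_rcons in hs.
Qed.

Lemma disj_sum k (P : 'I_k -> pred (seq bool)) L :
  (forall m1 m2 y, y \in L -> m1 != m2 -> P m1 y -> P m2 y -> False) ->
  \sum_(m < k) count (P m) L <= count (fun y => [exists m, P m y]) L.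
Proof.
elim: L => [|y L IH] H /=; first by rewrite big1.
rewrite big_split /= leq_add //; last first.
  by apply: IH => m1 m2 z hz; apply: H; rewrite inE hz orbT.
case: existsP => [[m0 hm0]|hn].
  rewrite (bigD1 m0) //= hm0 big1 // => m hm; apply/eqP; rewrite eqb0; apply/negP => hP.
  by apply: (H m m0 y); rewrite ?inE ?eqxx.
by rewrite big1 // => m _; apply/eqP; rewrite eqb0; apply/negP => hP; apply: hn; exists m.
Qed.

Lemma comb n t k (c : strategy k) t' K J :
  successful n t c -> t' <= t -> t' <= n -> J <= t - t' ->
  [/\ k <= 2 ^ (n - t'),
   (\sum_(m < k) (has (fun s => okS (c m) (nseq t' false) (zb (c m) [::] t t') s && (wt s <= K)) (allseq (n - t')) : nat))
     <= count (fun s => wt s <= K) (allseq (n - t')) &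
   (\sum_(m < k) (~~ has (fun s => okS (c m) (nseq t' false) (zb (c m) [::] t t') s && (wt s <= K)) (allseq (n - t')) : nat))
     * 'C(K.+1, J) <= 2 ^ (n - t')].
Proof.
move=> hsucc htt htn hJ.
set P := fun (m : 'I_k) s => okS (c m) (nseq t' false) (zb (c m) [::] t t') s.
have disj : forall (Q : 'I_k -> pred (seq bool)), (forall m s, Q m s -> P m s) ->
    \sum_(m < k) count (Q m) (allseq (n - t')) <= count (fun y => [exists m, Q m y]) (allseq (n - t')).
  move=> Q hQ; apply: disj_sum => m1 m2 y hy hne h1 h2.
  have hs := allseq_size hy.
  have [_ Z1] := zbP (c m1) [::] htt.
  have [_ Z2] := zbP (c m2) [::] htt.
  have hsz : size (nseq t' false ++ y) = n by rewrite size_cat size_nseq hs; lia.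
  apply: (hsucc m1 m2 (nseq t' false ++ y) hne); apply: okS_inY => //.
  - by apply: Z1; apply: hQ.
  - by apply: Z2; apply: hQ.
have tot : \sum_(m < k) count (P m) (allseq (n - t')) <= 2 ^ (n - t').
  apply: leq_trans (disj P (fun _ _ h => h)) _.
  by rewrite -(size_allseq (n - t')) count_size.
split.
- apply: (leq_trans _ tot); rewrite -[k in k <= _]card_ord -sum1_card.
  by apply: leq_sum => m _; apply: count_allseq_pos.
- set Q := fun (m : 'I_k) s => P m s && (wt s <= K).
  apply: (leq_trans _ (leq_trans (disj Q (fun m s h => proj1 (andP h))) _)).
  + apply: leq_sum => m _; case: hasP => // [[s hs hq]].
    by rewrite -has_count; apply/hasP; exists s.
  + apply: sub_count => y /existsP [m /andP[_ ->]] //.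
- apply: (leq_trans _ tot); rewrite big_distrl /=.
  apply: leq_sum => m _; case: hasP => [//|hn]; rewrite mul1n.
  have [Z1 _] := zbP (c m) [::] htt.
  have -> : J = minn (zb (c m) [::] t t') J by apply/esym/minn_idPr; lia.
  apply: tree_bound => s hs hok; rewrite ltnNge; apply/negP => hw.
  by apply: hn; exists s; [apply: allseqP | rewrite /P hok hw].
Qed.

Local Open Scope ring_scope.

Section Real1.
Variable R : realType.

Definition wgt (v : R) (y : seq bool) : R := \prod_(x <- y) (if x then v else 1 - v).

Lemma wsum v r : \sum_(y <- allseq r) wgt v y = 1.
Proof.
elim: r => [|r IH] /=; first by rewrite big_seq1 /wgt big_nil.
rewrite big_cat !big_map /=.
under eq_bigr => y _ do rewrite /wgt big_cons /=.
under [X in _ + X]eq_bigr => y _ do rewrite /wgt big_cons /=.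
rewrite -!mulr_sumr IH; ring.
Qed.

Lemma wgtE v y : wgt v y = v ^+ wt y * (1 - v) ^+ (size y - wt y).
Proof.
elim: y => [|x y IH]; first by rewrite /wgt big_nil expr0 mulr1.
rewrite /wgt big_cons -/(wgt v y) IH /wt /=.
case: x => /=.
  by rewrite subSS exprS mulrA.
have -> : ((size y).+1 - count id y = (size y - count id y).+1)%N.
  by have := count_size id y; lia.
by rewrite add0n exprS; ring.
Qed.

Lemma count_light (v : R) r K : 0 < v -> v <= 1 - v -> (K <= r)%N ->
  (count (fun s => (wt s <= K)%N) (allseq r))%:R * (v ^+ K * (1 - v) ^+ (r - K)) <= 1.
Proof.
move=> v0 vq Kr.
have v1 : 0 <= 1 - v by lra.
have wpos y : 0 <= wgt v y by rewrite wgtE mulr_ge0 // exprn_ge0 // ltW.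
have key : forall y, y \in allseq r -> (wt y <= K)%N ->
    v ^+ K * (1 - v) ^+ (r - K) <= wgt v y.
  move=> y /allseq_size hs hw; rewrite wgtE hs.
  have hwr : (wt y <= r)%N by rewrite -hs /wt count_size.
  have -> : (r - wt y = (r - K) + (K - wt y))%N by lia.
  have -> : K = (wt y + (K - wt y))%N by lia.
  rewrite addKn !exprD.
  rewrite -mulrA; apply: ler_wpM2l; first by rewrite exprn_ge0 // ltW.
  rewrite mulrC; apply: ler_wpM2l; first exact: exprn_ge0.
  by apply: lerXn2r; rewrite // ?nnegrE ?ltW.
rewrite -[X in _ <= X](wsum v r).
elim: (allseq r) key => [|y L IH] key /=; first by rewrite big_nil mul0r.
rewrite big_cons natrD mulrDl lerD //; last first.
  by apply: IH => z hz; apply: key; rewrite inE hz orbT.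
case hw: (wt y <= K)%N; last by rewrite mul0r.
by rewrite mul1r; apply: key; rewrite ?inE ?eqxx.
Qed.

Definition T (kk : nat) (p : R) (i : nat) : R := 'C(kk, i)%:R * p ^+ i * (1 - p) ^+ (kk - i).

Lemma T_ratio kk p i : (i < kk)%N ->
  T kk p i.+1 * (i.+1%:R * (1 - p)) = T kk p i * ((kk - i)%:R * p).
Proof.
move=> hi; rewrite /T.
have e1 : (kk - i = (kk - i.+1).+1)%N by lia.
rewrite e1.
have e2 : ('C(kk, i.+1) * i.+1 = 'C(kk, i) * (kk - i.+1).+1)%N
  by rewrite -e1 mulnC mul_bin_left mulnC.
have e3 : ('C(kk, i.+1))%:R * i.+1%:R = ('C(kk, i))%:R * (kk - i.+1).+1%:R :> R
  by rewrite -!natrM e2.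
set a := (kk - i.+1)%N.
rewrite !exprS.
transitivity ((('C(kk, i.+1))%:R * i.+1%:R) * (p * p ^+ i * (1 - p) ^+ a * (1 - p)) :> R).
  by ring.
by rewrite e3; ring.
Qed.

Lemma mode_bound kk J p : 0 < p < 1 ->
  (kk.+1)%:R * p - 1 <= J%:R <= (kk.+1)%:R * p ->
  1 <= (kk.+1)%:R * T kk p J.
Proof.
move=> /andP[p0 p1] /andP[hJ1 hJ2].
have q0 : 0 < 1 - p by lra.
have hJk : (J <= kk)%N.
  have : J%:R < (kk.+1)%:R :> R.
    apply: le_lt_trans hJ2 _; rewrite -[X in _ < X]mulr1 ltr_pM2l //.
  by rewrite ltr_nat ltnS.
have Tge0 i : 0 <= T kk p i by rewrite /T !mulr_ge0 // exprn_ge0 // ltW.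
have up : forall i, (i < J)%N -> T kk p i <= T kk p i.+1.
  move=> i hi.
  have hik : (i < kk)%N by lia.
  have := T_ratio p hik => E.
  have pos : 0 < i.+1%:R * (1 - p) by rewrite mulr_gt0 // ltr0n.
  rewrite -(ler_pM2r pos) E; apply: ler_wpM2l => //.
  have : (i.+1)%:R <= J%:R :> R by rewrite ler_nat.
  rewrite natrB ?(ltnW hik) // -addn1 natrD.
  move: hJ2; rewrite -addn1 natrD; nra.
have down : forall i, (J <= i)%N -> (i < kk)%N -> T kk p i.+1 <= T kk p i.
  move=> i hi hik.
  have := T_ratio p hik => E.
  have pos : 0 < i.+1%:R * (1 - p) by rewrite mulr_gt0 // ltr0n.
  rewrite -(ler_pM2r pos) E; apply: ler_wpM2l => //.
  have : J%:R <= i%:R :> R by rewrite ler_nat.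
  rewrite natrB ?(ltnW hik) // -addn1 natrD.
  move: hJ1; rewrite -addn1 natrD; nra.
have maxT : forall i, (i <= kk)%N -> T kk p i <= T kk p J.
  move=> i hi; case: (leqP i J) => hiJ.
    have : forall d, (d <= J)%N -> T kk p (J - d) <= T kk p J.
      elim=> [|d IH] hd; first by rewrite subn0.
      apply: (le_trans _ (IH (ltnW hd))).
      have -> : (J - d = (J - d.+1).+1)%N by lia.
      by apply: up; lia.
    by move=> /(_ (J - i)%N (leq_subr _ _)); rewrite subKn.
  have : forall d, (J + d <= kk)%N -> T kk p (J + d) <= T kk p J.
    elim=> [|d IH] hd; first by rewrite addn0.
    move: hd; rewrite addnS => hd.
    apply: (le_trans _ (IH (ltnW hd))).
    apply: down; lia.
  by move=> /(_ (i - J)%N); rewrite subnKC ?(ltnW hiJ) //; apply.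
have : 1 = \sum_(i < kk.+1) T kk p i.
  rewrite -(expr1n R kk) -[X in X ^+ _](subrK p) exprDn.
  by apply: eq_bigr => i _; rewrite /T -mulr_natl; ring.
move=> E.
apply: (@le_trans _ _ (\sum_(i < kk.+1) T kk p i)); first by rewrite -E.
apply: le_trans (_ : \sum_(i < kk.+1) T kk p J <= _).
  by apply: ler_sum => i _; apply: maxT; rewrite -ltnS.
by rewrite sumr_const card_ord -mulr_natl le_eqVlt; apply/orP; left; apply/eqP; ring.
Qed.
End Real1.

Section D.
Variable R : realType.

Definition HH (x : R) : R := - (x * ln x + (1 - x) * ln (1 - x)).

Lemma W_lb (v : R) (K n' : nat) : 0 < v -> v <= 1 - v -> K%:R <= v * n'%:R -> (K <= n')%N ->
  expR (- (n'%:R * HH v)) <= v ^+ K * (1 - v) ^+ (n' - K).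
Proof.
move=> v0 vq hK hKn.
have q0 : 0 < 1 - v by lra.
have W0 : 0 < v ^+ K * (1 - v) ^+ (n' - K) by rewrite mulr_gt0 // exprn_gt0.
rewrite -[X in _ <= X]lnK ?posrE // ler_expR.
have a0 : 0 < v ^+ K by rewrite exprn_gt0.
have b0 : 0 < (1 - v) ^+ (n' - K) by rewrite exprn_gt0.
rewrite (lnM a0 b0).
rewrite (lnXn K v0) (lnXn (n' - K) q0).
Timeout 20 rewrite -[ln v *+ K]mulr_natr -[ln (1 - v) *+ _]mulr_natr.
Timeout 20 rewrite (natrB _ hKn) /HH.
have hl : ln v <= ln (1 - v).
  Timeout 20 rewrite ler_ln ?posrE //.
have key : 0 <= (v * n'%:R - K%:R) * (ln (1 - v) - ln v).
  Timeout 20 (apply: mulr_ge0; rewrite subr_ge0 //).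
Timeout 20 rewrite -subr_ge0.
 Timeout 20 apply: le_trans key _.
 Timeout 20  rewrite le_eqVlt; apply/orP; left; apply/eqP.
Timeout 30 ring.
Qed.

Lemma per_n n t k (c : strategy k) t' (K J : nat) (v p : R) :
  successful n t c -> (t' <= t)%N -> (t' <= n)%N -> (J <= t - t')%N ->
  (K <= n - t')%N -> 0 < v <= 2^-1 -> K%:R <= v * (n - t')%:R ->
  0 < p <= 2^-1 -> (K.+2)%:R * p - 1 <= J%:R <= (K.+2)%:R * p ->
  k%:R <= expR ((n - t')%:R * HH v) +
          2 ^+ (n - t') * (K.+2)%:R * (p ^+ J * (1 - p) ^+ (K.+1 - J)).
Proof.
move=> hs htt htn hJ hKn /andP[v0 v2] hKv /andP[p0 p2] hJp.
have [_ H1 H2] := comb K hs htt htn hJ.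
set k1 := (\sum_(m < k) _)%N in H1.
set k2 := (\sum_(m < k) _)%N in H2.
have hk : k = (k1 + k2)%N.
  rewrite /k1 /k2 -big_split /= -[k in k = _]card_ord -sum1_card.
  by apply: eq_bigr => m _; case: has.
rewrite hk natrD lerD //.
- have hc := count_light (v := v) (r := n - t') (K := K) v0 ltac:(lra) hKn.
  have hW := @W_lb v K (n - t')%N v0 ltac:(lra) hKv hKn.
  set W := v ^+ K * (1 - v) ^+ (n - t' - K) in hc hW.
  have W0 : 0 < W by apply: lt_le_trans hW; exact: expR_gt0.
  have : (k1%:R : R) <= W^-1.
    rewrite -(ler_pM2r W0) mulVf ?gt_eqF //; apply: le_trans hc.
    by apply: ler_wpM2r; [exact: ltW | rewrite ler_nat].
  move=> /le_trans; apply.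
  rewrite -[X in _ <= X]invrK lef_pV2 ?posrE ?invr_gt0 ?expR_gt0 //.
  by rewrite -expRN.
- have hm := @mode_bound R K.+1 J p ltac:(lra) hJp.
  move: H2; rewrite -(ler_nat R) natrM natrX => H2.
  apply: le_trans (_ : k2%:R * ('C(K.+1, J)%:R * (K.+2)%:R * (p ^+ J * (1 - p) ^+ (K.+1 - J))) <= _).
    rewrite -[X in X <= _]mulr1 ler_wpM2l //.
    by move: hm; rewrite /T; congr (_ <= _); ring.
  have e : k2%:R * ('C(K.+1, J)%:R * (K.+2)%:R * (p ^+ J * (1 - p) ^+ (K.+1 - J))) =
     (k2%:R * 'C(K.+1, J)%:R) * ((K.+2)%:R * (p ^+ J * (1 - p) ^+ (K.+1 - J))) :> R by ring.
  rewrite e -[2 ^+ _ * _ * _]mulrA; apply: ler_wpM2r => //.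
  by rewrite mulr_ge0 // mulr_ge0 // exprn_ge0 //; lra.
Qed.
End D.

Lemma admits0 n t : admits n t 0.
Proof. by exists (fun _ _ => false) => m1; case: m1. Qed.

Lemma Mnt_admits n t : admits n t (Mnt n t).
Proof.
rewrite /Mnt.
have P0 : `[< admits n t (@ord0 (2 ^ n)) >] by apply/asboolP; exact: admits0.
rewrite (bigop.bigmax_eq_arg ord0 P0).
by case: fintype.arg_maxnP => //= i /asboolP.
Qed.

Lemma Mnt_le n t : (Mnt n t <= 2 ^ n)%N.
Proof. by apply/bigop.bigmax_leqP => i _; rewrite -ltnS. Qed.

Section E.
Variable R : realType.

Definition useq (tau : R) (n : nat) : R :=
  (n%:R)^-1 * log2 ((Mnt n `|Num.ceil (tau * n%:R)|%N)%:R : R).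

Lemma log2_ge0 (x : nat) : 0 <= log2 (x%:R : R).
Proof.
rewrite /log2; case: x => [|x]; first by rewrite ln0 ?mul0r.
apply: divr_ge0; apply: ln_ge0; rewrite ?ler1n //.
Qed.

Lemma useq_ge0 tau n : 0 <= useq tau n.
Proof. by rewrite /useq mulr_ge0 ?invr_ge0 ?log2_ge0. Qed.

Lemma ln2_gt0 : 0 < ln (2 : R).
Proof. by apply: ln_gt0; lra. Qed.

Lemma log2_le (x : nat) (y : R) : 1 <= y -> x%:R <= y -> log2 (x%:R : R) <= ln y / ln 2.
Proof.
move=> y1 hxy; rewrite /log2; apply: ler_wpM2r; first by rewrite invr_ge0 ltW // ln2_gt0.
case: x hxy => [|x] hxy; first by rewrite ln0 // ln_ge0.
by rewrite ler_ln // posrE; [rewrite ltr0n | lra].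
Qed.

Lemma useq_le1 tau n : useq tau n <= 1.
Proof.
rewrite /useq; case: n => [|n]; first by rewrite invr0 mul0r.
have h := log2_le (x := Mnt n.+1 `|Num.ceil (tau * n.+1%:R)|%N) (y := 2 ^+ n.+1)
   ltac:(by rewrite exprn_ege1 //; lra) ltac:(by rewrite -natrX ler_nat Mnt_le).
rewrite ler_pdivrMl ?ltr0n // mulr1; apply: le_trans h _.
rewrite lnXn; last lra.
by rewrite -[ln 2 *+ _]mulr_natl mulfK // gt_eqF // ln2_gt0.
Qed.

Lemma Rate_le tau (L : R) :
  (forall e, 0 < e -> exists N, forall n, (N <= n)%N -> useq tau n <= L + e) ->
  Rate tau <= L.
Proof.
move=> H.
have bnd : bounded_fun (useq tau).
  rewrite /bounded_near; near=> M.
  have M1 : 1 <= M by near: M; apply: nbhs_pinfty_ge; rewrite num_real.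
  move=> n _ /=.
  rewrite ger0_norm ?useq_ge0 //; exact: le_trans (useq_le1 tau n) _.
rewrite /Rate -/(useq tau) limn_supE //.
apply/ler_addgt0Pr => e e0.
have [N HN] := H e e0.
apply: le_trans (_ : sups (useq tau) N <= _).
  apply: ge_inf; last by exists N.
  exact: bounded_fun_has_lbound_sups.
apply: ge_sup; first by exists (useq tau N); exists N => /=.
by move=> _ [m /= hm <-]; apply: HN.
Unshelve. all: by end_near.
Qed.
End E.

Section F.
Variable R : realType.

Lemma setup (tau tau' : R) n : 0 < tau < 1 -> 0 <= tau' <= tau ->
  [/\ (Num.truncn (tau' * n%:R) <= `|Num.ceil (tau * n%:R)|)%N,
      (Num.truncn (tau' * n%:R) <= n)%N,
      tau * n%:R <= (`|Num.ceil (tau * n%:R)|%N)%:R,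
      (Num.truncn (tau' * n%:R))%:R <= tau' * n%:R &
      tau' * n%:R < (Num.truncn (tau' * n%:R))%:R + 1].
Proof.
move=> /andP[t0 t1] /andP[tp0 tpt].
have n0 : 0 <= n%:R :> R by [].
have c0 : (0 <= Num.ceil (tau * n%:R))%R by rewrite ceil_ge0; nra.
have ct : (`|Num.ceil (tau * n%:R)|%N)%:R = (Num.ceil (tau * n%:R))%:~R :> R.
  by rewrite natr_absz ger0_norm.
have hc : tau * n%:R <= (`|Num.ceil (tau * n%:R)|%N)%:R by rewrite ct ceil_ge.
have /andP[htr1 htr2] := @truncn_itv _ (tau' * n%:R) ltac:(nra).
split => //.
- by rewrite -(ler_nat R); apply: le_trans htr1 _; apply: le_trans hc; nra.
- by rewrite -(ler_nat R); apply: le_trans htr1 _; nra.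
- by move: htr2; rewrite -addn1 natrD.
Qed.

Lemma h_HH (x : R) : h x = HH x / ln 2.
Proof.
rewrite /h /HH /log2; have := ln2_gt0 R => l2; field; lra.
Qed.

Lemma HH_ge0 (x : R) : 0 < x < 1 -> 0 <= HH x.
Proof.
move=> /andP[x0 x1]; rewrite /HH oppr_ge0.
have a : ln x < 0 by apply: ln_lt0; lra.
have b : ln (1 - x) < 0 by apply: ln_lt0; lra.
nra.
Qed.

Lemma useq_bound tau n (X : R) : (0 < n)%N -> 0 <= X ->
  (Mnt n `|Num.ceil (tau * n%:R)|%N)%:R <= expR X -> useq tau n <= X / (n%:R * ln 2).
Proof.
move=> n0 X0 hM.
have l2 := ln2_gt0 R.
have nr : 0 < n%:R :> R by rewrite ltr0n.
rewrite /useq; set M := Mnt _ _ in hM *.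
have : log2 (M%:R : R) <= X / ln 2.
  rewrite -[X in X / _]expRK; apply: log2_le => //.
  by rewrite -expR0 ler_expR.
move=> hl.
have -> : X / (n%:R * ln 2) = n%:R^-1 * (X / ln 2) by field; apply/andP; split; lra.
by apply: ler_wpM2l => //.
Qed.
End F.

Section G.
Variable R : realType.

Lemma expR_ln2n (m : nat) : expR (m%:R * ln 2) = 2 ^+ m :> R.
Proof. by rewrite expRM_natl lnK // posrE; lra. Qed.

Lemma big_N (x : R) : exists N : nat, forall n, (N <= n)%N -> x < n%:R.
Proof.
exists (Num.truncn x).+1 => n hn.
case: (lerP 0 x) => hx; last by apply: lt_le_trans hx _.
apply: lt_le_trans (_ : (Num.truncn x).+1%:R <= _); last by rewrite ler_nat.
by have /andP[] := @truncn_itv _ x hx.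
Qed.

Lemma trivial_bound (tau tau' : R) : 0 < tau < 1 -> 0 <= tau' <= tau ->
  Rate tau <= 1 - tau'.
Proof.
move=> ht htp; apply: Rate_le => e e0.
have [N HN] := big_N (Num.max 1 e^-1).
exists N => n hn.
have hn' := HN n hn.
have n1 : 1 < n%:R :> R by apply: le_lt_trans hn'; rewrite le_max lexx.
have ne : e^-1 < n%:R :> R by apply: le_lt_trans hn'; rewrite le_max lexx orbT.
have n0 : (0 < n)%N by rewrite -(ltr_nat R); lra.
have [h1 h2 h3 h4 h5] := setup n ht htp.
set t := `|Num.ceil (tau * n%:R)|%N in h1 h2 h3 *.
set t' := Num.truncn (tau' * n%:R) in h1 h2 h4 h5 *.
have [c hs] := Mnt_admits n t.
have [hk _ _] := comb 0%N hs h1 h2 (leq0n (t - t')).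
have l2 := ln2_gt0 R.
have := @useq_bound R tau n ((n - t')%:R * ln 2) n0 ltac:(by rewrite mulr_ge0 // ltW).
rewrite expR_ln2n -natrX ler_nat => /(_ hk) hu.
apply: le_trans hu _.
have nr : 0 < n%:R :> R by rewrite ltr0n.
rewrite natrB //.
have -> : (n%:R - t'%:R) * ln 2 / (n%:R * ln 2) = (n%:R - t'%:R) / n%:R :> R.
  by field; apply/andP; split; lra.
rewrite ler_pdivrMr //.
have : n%:R^-1 < e by rewrite -(invrK e) ltf_pV2 ?posrE ?invr_gt0 ?ltr0n.
rewrite -(ltr_pM2r (_ : 0 < n%:R)) ?ltr0n // mulVf ?gt_eqF ?ltr0n // => hen.
nra.
Qed.
End G.

Section H.
Variable R : realType.

Lemma lnZ_bound (m K J : nat) (p v d : R) :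
  0 < p <= 2^-1 -> (K.+2)%:R * p - 1 <= J%:R <= (K.+2)%:R * p ->
  v * m%:R - 3 <= K.+1%:R -> (K.+2 <= m)%N -> 0 < d ->
  2 ^+ m * (K.+2)%:R * (p ^+ J * (1 - p) ^+ (K.+1 - J)) <=
  expR (m%:R * ln 2 + d * m%:R - ln d - (v * m%:R - 3) * HH p
        + (1 - p) * (ln (1 - p) - ln p)).
Proof.
move=> /andP[p0 p2] /andP[hJ1 hJ2] hK hKm d0.
have q0 : 0 < 1 - p by lra.
have hJK : (J <= K.+1)%N.
  rewrite -(ler_nat R); apply: le_trans hJ2 _.
  have k0 : 0 <= K%:R :> R by [].
  have hh : 0 <= (K.+2)%:R * (2^-1 - p) :> R by apply: mulr_ge0 => //; lra.
  have k2 : (K.+2)%:R = K%:R + 2 :> R by rewrite -!natr1; ring.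
  have k1 : (K.+1)%:R = K%:R + 1 :> R by rewrite -!natr1.
  rewrite k1 k2; rewrite k2 in hh; nra.
have a0 : 0 < (2 : R) ^+ m by rewrite exprn_gt0.
have b0 : 0 < (K.+2)%:R :> R by rewrite ltr0n.
have c0 : 0 < p ^+ J by rewrite exprn_gt0.
have e0 : 0 < (1 - p) ^+ (K.+1 - J) by rewrite exprn_gt0.
have Z0 : 0 < 2 ^+ m * (K.+2)%:R * (p ^+ J * (1 - p) ^+ (K.+1 - J)) :> R
  by rewrite !mulr_gt0.
rewrite -[X in X <= _]lnK ?posrE // ler_expR.
rewrite (lnM (mulr_gt0 a0 b0) (mulr_gt0 c0 e0)) (lnM a0 b0) (lnM c0 e0).
rewrite (lnXn m (_ : 0 < (2 : R))) ?(lnXn J p0) ?(lnXn (K.+1 - J) q0); last lra.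
rewrite -[ln 2 *+ m]mulr_natr -[ln p *+ J]mulr_natr -[ln (1 - p) *+ _]mulr_natr.
rewrite (natrB _ hJK).
have hl : ln (K.+2)%:R <= d * m%:R - ln d.
  have := ln_sublinear (mulr_gt0 d0 b0).
  rewrite (lnM d0 b0) => h.
  have : d * (K.+2)%:R <= d * m%:R by rewrite ler_pM2l // ler_nat.
  lra.
have lpq : ln p <= ln (1 - p) by rewrite ler_ln ?posrE //; lra.
have HHp : HH p = - (p * ln p + (1 - p) * ln (1 - p)) by [].
have HH0 : 0 <= HH p by apply: HH_ge0; lra.
set L := ln (1 - p) - ln p.
have L0 : 0 <= L by rewrite /L subr_ge0.
have s1 : (J%:R - ((K.+2)%:R * p - 1)) * L >= 0 by apply: mulr_ge0; lra.
have s2 : (K.+1%:R - (v * m%:R - 3)) * HH p >= 0 by apply: mulr_ge0; lra.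
have e1 : ln p * J%:R + ln (1 - p) * (K.+1%:R - J%:R) =
   - K.+1%:R * HH p + (1 - p) * L - (J%:R - ((K.+2)%:R * p - 1)) * L.
  rewrite /L HHp -addn1 natrD; ring.
have e2 : - K.+1%:R * HH p = - (v * m%:R - 3) * HH p - (K.+1%:R - (v * m%:R - 3)) * HH p.
  ring.

lra.
Qed.
End H.

Section I.
Variable R : realType.

Lemma arith_J (tau tau' v p n m tp J K2 : R) :
  0 < p -> 0 < v <= 1 -> 0 <= n -> J <= K2 * p -> K2 <= v * m - 1 ->
  m < (1 - tau') * n + 1 -> p * v * (1 - tau') <= tau - tau' -> tp <= tau' * n ->
  J + tp <= tau * n.
Proof.
move=> p0 /andP[v0 v1] n0 hJ hK hm hpa htp.
have s1 : K2 * p <= (v * m - 1) * p by rewrite ler_pM2r.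
have s2 : p * v * m <= p * v * ((1 - tau') * n + 1)
  by rewrite ler_pM2l ?mulr_gt0 // ltW.
have s3 : p * v * (1 - tau') * n <= (tau - tau') * n by apply: ler_wpM2r.
have s4 : p * v <= p by rewrite ler_piMr //; tlra.
have e1 : (v * m - 1) * p = p * v * m - p by ring.
have e2 : p * v * ((1 - tau') * n + 1) = p * v * (1 - tau') * n + p * v by ring.
have e3 : (tau - tau') * n = tau * n - tau' * n by ring.
tlra.
Qed.

Lemma exp_cmp (m v p d D C1 hv hp l2 lq : R) :
  D = hv - l2 + v * hp -> d = D / 2 -> C1 = 3 * hp + lq ->
  2 * (C1 - ln d) <= m * D ->
  m * l2 + d * m - ln d - (v * m - 3) * hp + lq <= m * hv.
Proof.
move=> eD ed eC h.
set ld := ln d in h *; clearbody ld.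
have e : m * hv - (m * l2 + d * m - ld - (v * m - 3) * hp + lq)
        = (m * D) / 2 + ld - C1.
  by rewrite ed eD eC; field.
rewrite -subr_ge0 e; tlra.
Qed.

Lemma final_u (n m beta hv e u : R) : 0 < n -> 0 <= hv ->
  m < beta * n + 1 -> (1 + hv) / e < n -> 0 < e ->
  u <= n^-1 + m / n * hv -> u <= beta * hv + e.
Proof.
move=> n0 hv0 hm hn e0 hu.
have a : m / n <= beta + n^-1.
  by rewrite ler_pdivrMr // mulrDl mulVf ?gt_eqF //; tlra.
have b : n^-1 * (1 + hv) <= e.
  move: hn; rewrite ltr_pdivrMr // => hn.
  by rewrite mulrC ler_pdivrMr //; tlra.
have c : m / n * hv <= (beta + n^-1) * hv by apply: ler_wpM2r.
have e1 : (beta + n^-1) * hv = beta * hv + n^-1 * hv by ring.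
have e2 : n^-1 * (1 + hv) = n^-1 + n^-1 * hv by ring.
tlra.
Qed.


Lemma main_bound (tau tau' v p : R) : 0 < tau < 1 -> 0 <= tau' <= tau ->
  0 < v <= 2^-1 -> 0 < p <= 2^-1 -> p * v * (1 - tau') <= tau - tau' ->
  ln 2 - v * HH p < HH v -> Rate tau <= (1 - tau') * (HH v / ln 2).
Proof.
move=> ht htp hv hp hpa hD.
have l2 := ln2_gt0 R.
move: (ht) (htp) (hv) (hp) => /andP[t0 t1] /andP[tp0 tpt] /andP[v0 v2] /andP[p0 p2].
have b0 : 0 < 1 - tau' by tlra.
have D0 : 0 < HH v - ln 2 + v * HH p by tlra.
have d0 : 0 < (HH v - ln 2 + v * HH p) / 2 by tlra.
have HHv0 : 0 <= HH v by apply: HH_ge0; tlra.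
have hv0 : 0 <= HH v / ln 2 by rewrite divr_ge0 // ltW.
apply: Rate_le => e e0.
have [N HN] := big_N (Num.max (Num.max 1 (3 / (v * (1 - tau'))))
     (Num.max (2 * ((3 * HH p + (1 - p) * (ln (1 - p) - ln p)) - ln ((HH v - ln 2 + v * HH p) / 2))
                / ((HH v - ln 2 + v * HH p) * (1 - tau'))) ((1 + HH v / ln 2) / e))).
exists N => n hn.
have := HN n hn; rewrite !gt_max => /andP[/andP[n1 n3] /andP[nC ne]].
have nr0 : 0 < n%:R :> R by tlra.
have n0 : (0 < n)%N by rewrite -(ltr_nat R).
have [h1 h2 h3 h4 h5] := setup n ht htp.
move: h1 h2 h3 h4 h5 (Mnt_admits n `|Num.ceil (tau * n%:R)|%N).
move: (Num.truncn (tau' * n%:R)) => t'.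
have := @useq_bound R tau n; move: (useq tau n) => u hub.
move: (`|Num.ceil (tau * n%:R)|%N) hub => t hub h1 h2 h3 h4 h5 [c hs].
have mE : (n - t')%:R = n%:R - t'%:R :> R by rewrite natrB.
have m_lo : (1 - tau') * n%:R <= (n - t')%:R by rewrite mE; tlra.
have m_hi : (n - t')%:R < (1 - tau') * n%:R + 1 by rewrite mE; tlra.
have vm3 : 3 <= v * (n - t')%:R.
  have h : 3 < v * (1 - tau') * n%:R.
    by move: n3; rewrite ltr_pdivrMr ?mulr_gt0 // mulrC.
  apply: le_trans (ltW h) _; rewrite -mulrA ler_pM2l //.
have /andP[tr1 tr2] := @truncn_itv _ (v * (n - t')%:R) ltac:(tlra).
have tr3 : (3 <= Num.truncn (v * (n - t')%:R))%N by rewrite truncn_ge_nat //; tlra.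
have [K KE] : {K : nat | K.+3 = Num.truncn (v * (n - t')%:R)}.
  by exists (Num.truncn (v * (n - t')%:R) - 3)%N; rewrite -addn3 subnK.
rewrite -KE in tr1 tr2.
have KR : K%:R = (K.+3)%:R - 3 :> R by rewrite -!natr1; ring.
have KR1 : K.+1%:R = (K.+3)%:R - 2 :> R by rewrite -!natr1; ring.
have KR2 : K.+2%:R = (K.+3)%:R - 1 :> R by rewrite -!natr1; ring.
have /andP[J1 J2] := @truncn_itv _ (K.+2%:R * p) ltac:(by rewrite mulr_ge0 // ltW).
move: (Num.truncn (K.+2%:R * p)) J1 J2 => J J1 J2.
have hmode : K.+2%:R * p - 1 <= J%:R <= K.+2%:R * p.
  by apply/andP; split; [move: J2; rewrite -natr1; tlra | exact: J1].
have mv : v * (n - t')%:R <= (n - t')%:R by rewrite ler_piMl //; tlra.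
have hKm : (K <= n - t')%N by rewrite -(ler_nat R) KR; tlra.
have hKv : K%:R <= v * (n - t')%:R by rewrite KR; tlra.
have hK2m : (K.+2 <= n - t')%N by rewrite -(ler_nat R) KR2; tlra.
have hJt : (J <= t - t')%N.
  suff : (J + t' <= t)%N by move=> h; rewrite leq_subRL // addnC.
  rewrite -(ler_nat R) natrD.
  apply: le_trans h3.
  apply: (@arith_J tau tau' v p n%:R (n - t')%:R t'%:R J%:R K.+2%:R) => //.
  - by apply/andP; split; tlra.
  - by rewrite KR2; tlra.
have hm := per_n hs h1 h2 hJt hKm (hv) hKv hp hmode.
set D := HH v - ln 2 + v * HH p in D0 d0 nC.
set C1 := 3 * HH p + (1 - p) * (ln (1 - p) - ln p) in nC.
have hZ := @lnZ_bound R (n - t') K J p v (D / 2) hp hmode ltac:(rewrite KR1; tlra) hK2m d0.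
have hexp : (n - t')%:R * ln 2 + D / 2 * (n - t')%:R - ln (D / 2) - (v * (n - t')%:R - 3) * HH p
        + (1 - p) * (ln (1 - p) - ln p) <= (n - t')%:R * HH v.
  apply: (@exp_cmp _ _ _ _ D C1) => //.
  have h : 2 * (C1 - ln (D / 2)) < n%:R * (D * (1 - tau')).
    by move: nC; rewrite ltr_pdivrMr ?mulr_gt0.
  apply: le_trans (ltW h) _.
  have -> : n%:R * (D * (1 - tau')) = ((1 - tau') * n%:R) * D by ring.
  by rewrite ler_pM2r.
have hZ' := le_trans hZ (eqbRL (ler_expR _ _) hexp).
have hM : (Mnt n t)%:R <= expR (ln 2 + (n - t')%:R * HH v).
  have e2 : expR (ln 2) = 2 :> R by rewrite lnK // posrE; tlra.
  rewrite expRD e2.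
  apply: le_trans hm _; tlra.
have hu := hub (ln 2 + (n - t')%:R * HH v) n0 ltac:(by rewrite addr_ge0 ?mulr_ge0 // ltW) hM.
apply: (@final_u n%:R (n - t')%:R) => //.
apply: le_trans hu _; rewrite le_eqVlt; apply/orP; left; apply/eqP.
by field; apply/andP; split; tlra.
Qed.
End I.

Section J.
Local Open Scope classical_set_scope.
Variable R : realType.

Lemma h_cont (x : R) : 0 < x < 1 -> {for x, continuous (@h R)}.
Proof.
move=> /andP[x0 x1].
have c1 : {for x, continuous (@ln R)} := continuous_ln x0.
have c2 : {for x, continuous (fun y : R => ln (1 - y))}.
  apply: (@continuous_comp _ _ _ (fun y : R => 1 - y) (@ln R)).
    by apply: cvgB; [exact: cvg_cst | exact: cvg_id].
  by apply: continuous_ln; rewrite subr_gt0.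
rewrite /h /log2.
apply: cvgB; apply: cvgM.
- by apply: cvgN; exact: cvg_id.
- by apply: cvgM; [exact: c1 | exact: cvg_cst].
- by apply: cvgB; [exact: cvg_cst | exact: cvg_id].
- by apply: cvgM; [exact: c2 | exact: cvg_cst].
Qed.

Lemma h0 : h (0 : R) = 0.
Proof. by rewrite /h /log2 ln0 // subr0 ln1 !mul0r !mulr0 subr0. Qed.

Lemma h_half : h (2^-1 : R) = 1.
Proof.
have e : 1 - 2^-1 = 2^-1 :> R by field.
have l2 := ln2_gt0 R.
have e2 : ln (2^-1 : R) = - ln 2 by rewrite lnV // posrE; tlra.
rewrite /h /log2 e e2.
by field; rewrite gt_eqF.
Qed.

Lemma HH_le (x c : R) : 0 < x < 1 -> 0 < c -> HH x <= c + x * (1 - ln c).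
Proof.
move=> /andP[x0 x1] c0.
have q0 : 0 < 1 - x by tlra.
have a : ln (c / x) < c / x by apply: ln_sublinear; rewrite divr_gt0.
rewrite ln_div ?posrE // in a.
have a' : x * (ln c - ln x) < x * (c / x) by rewrite ltr_pM2l.
have ex : x * (c / x) = c by field; tlra.
rewrite ex in a'.
have b : ln (1 + x / (1 - x)) <= x / (1 - x).
  by apply: le_ln1Dx; apply: lt_le_trans (_ : 0 <= _); [tlra | rewrite divr_ge0 // ltW].
have eb : 1 + x / (1 - x) = (1 - x)^-1 by field; tlra.
rewrite eb lnV ?posrE // in b.
have b' : (1 - x) * (- ln (1 - x)) <= (1 - x) * (x / (1 - x)) by rewrite ler_pM2l.
have eb' : (1 - x) * (x / (1 - x)) = x by field; tlra.
rewrite eb' in b'.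
rewrite /HH; tlra.
Qed.

Lemma find_v (z : R) : 0 < z < 1 -> exists v : R, [/\ 0 < v, v <= 2^-1 & h v = z].
Proof.
move=> /andP[z0 z1].
have l2 := ln2_gt0 R.
have l21 : ln (2 : R) <= 1.
  have := @le_ln1Dx R 1 ltac:(tlra); have -> : (1 + 1 : R) = 2 by [].
  by [].
set c := z * ln 2 / 2.
have c0 : 0 < c by rewrite /c divr_gt0 // mulr_gt0.
have c1 : c < 1.
  rewrite /c ltr_pdivrMr //; apply: le_lt_trans (_ : z * 1 < _); last by tlra.
  by rewrite ler_pM2l.
have lc : ln c < 0 by apply: ln_lt0; tlra.
have lc1 : 0 < 1 - ln c by tlra.
set x0 := Num.min 2^-1 (c / (1 - ln c)).
have x00 : 0 < x0 by rewrite /x0 lt_min; apply/andP; split; [tlra | rewrite divr_gt0].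
have x02 : x0 <= 2^-1 by rewrite /x0 ge_min lexx.
have x0c : x0 <= c / (1 - ln c) by rewrite /x0 ge_min lexx orbT.
have hx0 : h x0 <= z.
  rewrite h_HH ler_pdivrMr //.
  apply: le_trans (HH_le _ c0) _; first by apply/andP; split; tlra.
  have : x0 * (1 - ln c) <= c.
    by rewrite -ler_pdivlMr.
  rewrite /c; tlra.
have hc : {within `[x0, 2^-1], continuous (@h R)}.
  apply: continuous_in_subspaceT => y; rewrite inE /= in_itv /= => /andP[y1 y2].
  by apply: h_cont; apply/andP; split; tlra.
have hz : Num.min (h x0) (h 2^-1) <= z <= Num.max (h x0) (h 2^-1).
  rewrite ge_min le_max h_half hx0 /=; apply/orP; right; tlra.
have [v hv hvz] := IVT x02 hc hz.
exists v; move: hv; rewrite in_itv /= => /andP[v1 v2]; split => //; tlra.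
Qed.
End J.

Section K.
Variable R : realType.
Local Open Scope classical_set_scope.

Lemma per_tau' (tau tau' : R) : 0 < tau < 1 -> 0 <= tau' <= tau ->
  Rate tau <= sup (inner_set tau tau').
Proof.
move=> ht htp.
move: (ht) (htp) => /andP[t0 t1] /andP[tp0 tpt].
have l2 := ln2_gt0 R.
have b0 : 0 < 1 - tau' by tlra.
set S := inner_set tau tau'.
have S0 : S 0.
  split; first by rewrite lexx ler01.
  exists 0; split; first by rewrite lexx invr_ge0 ler0n.
  - by rewrite h0 mul0r.
  - by rewrite h0 mul0r subr0 ler01.
have Sub : has_ubound S by exists 1 => r [/andP[_ r1] _].
have s0 : 0 <= sup S by apply: ub_le_sup.
case: (lerP (Rate tau) (sup S)) => // hlt.
have hr := trivial_bound ht htp.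
set y := (sup S + Rate tau) / 2.
have y1 : sup S < y by rewrite /y; tlra.
have y2 : y < Rate tau by rewrite /y; tlra.
set z := y / (1 - tau').
have z0 : 0 < z by rewrite /z divr_gt0 //; tlra.
have z1 : z < 1 by rewrite /z ltr_pdivrMr //; tlra.
have hz : 0 < z < 1 by apply/andP.
have [v [v0 v2 hvz]] := find_v hz.
set p := Num.min ((tau - tau') / (v * (1 - tau'))) 2^-1.
have hyv : h v * (1 - tau') = y by rewrite hvz /z mulfVK // gt_eqF.
case: (leP (h v) (1 - v * h p)) => hcond.
  have : S y.
    split; first by apply/andP; split; tlra.
    by exists v; split => //; apply/andP; split; tlra.
  by move=> /(ub_le_sup Sub); tlra.
have pa0 : 0 <= (tau - tau') / (v * (1 - tau')) by rewrite divr_ge0 ?mulr_ge0 //; tlra.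
have p0 : 0 <= p by rewrite /p le_min pa0 invr_ge0 ler0n.
have p2 : p <= 2^-1 by rewrite /p ge_min lexx orbT.
have pa : p <= (tau - tau') / (v * (1 - tau')) by rewrite /p ge_min lexx.
have pn0 : p != 0.
  apply/eqP => pe; move: hcond; rewrite pe h0 mulr0 subr0 hvz; tlra.
have p0' : 0 < p by rewrite lt_neqAle eq_sym pn0 p0.
have hpa : p * v * (1 - tau') <= tau - tau'.
  have vb : 0 < v * (1 - tau') by rewrite mulr_gt0.
  by move: pa; rewrite (ler_pdivlMr _ _ vb) mulrA.
have hD : ln 2 - v * HH p < HH v.
  move: hcond; rewrite !h_HH.
  rewrite -(ltr_pM2r l2) mulfVK ?gt_eqF // mulrBl mul1r.
  have -> : v * (HH p / ln 2) * ln 2 = v * HH p by field; rewrite gt_eqF.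
  by [].
have hv' : 0 < v <= 2^-1 by apply/andP.
have hp' : 0 < p <= 2^-1 by apply/andP.
have := main_bound ht htp hv' hp' hpa hD.
rewrite -h_HH mulrC hyv => hR.
by have := lt_le_trans y2 hR; rewrite ltxx.
Qed.

End K.

End Helpers.
Import Helpers.
Local Open Scope ring_scope.

Theorem theorem3 (R : realType) (tau : R) :
  0 < tau < 1 -> Rate tau <= Rbar tau.
Proof.
move=> ht; rewrite /Rbar; apply: lb_le_inf.
  exists (sup (inner_set tau 0)); exists 0 => //=.
  by case/andP: ht => t0 _; apply/andP; split => //; exact: ltW.
by move=> _ [tau' htp <-]; apply: per_tau'.
Qed.
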